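(* Let $\gamma\in[0,1]$. Let $\Lambda:\mathbb{R}\to\mathbb{R}$ be $C^2$, monotonically increasing and bi-asymptotically constant with $\lim_{t\to\pm\infty}\Lambda(t)=\lambda^\pm$, and for $r>0$ put $\Lambda_r(\tau)=\Lambda(r\tau)$. Let $V_p(\Lambda_r(\tau))>0$ and $c(\Lambda_r(\tau))>0$ be parameter functions, set $V_p^-=\lim_{\tau\to-\infty}V_p(\Lambda_r(\tau))>0$, and consider the nonautonomous system $$\frac{dv}{d\tau}=\frac{(1-\gamma)V_p(\Lambda_r(\tau))^2}{(V_p^-)^2}m^3-(1-\gamma m^3)v^2,\qquad \frac{dm}{d\tau}=(1-m)v-c(\Lambda_r(\tau))m .$$ Assume the frozen system (parameters fixed at $\Lambda_r=\lambda$) has three equilibria at $\lambda=\lambda^-$, namely $\mathcal{O}=(0,0)$, a saddle $\mathcal{U}^-$ and a stable storm state $\mathcal{S}^-$, and three equilibria at $\lambda=\lambda^+$, namely $\mathcal{O}$, $\mathcal{U}^+$, $\mathcal{S}^+$. Assume there exist continuous paths $(\tau,p_u(\tau))$ and $(\tau,p_s(\tau))$, where for each $\tau$, $p_u(\tau)$ is the unstable (saddle) storm equilibrium and $p_s(\tau)$ the stable storm equilibrium of the frozen system at $\Lambda_r(\tau)$, with $p_u(\tau)\ne p_s(\tau)$ for all $\tau$, $p_u(\tau)\to\mathcal{U}^\pm$ and $p_s(\tau)\to\mathcal{S}^\pm$ as $\tau\to\pm\infty$. If either $\tau\mapsto V_p(\Lambda_r(\tau))$ or $\tau\mapsto c(\Lambda_r(\tau))$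 is nonincreasing, then there is no rate-induced tipping away from the stable storm state $\mathcal{S}^-$ to the non-storm state $\mathcal{O}$: the solution that converges to $\mathcal{S}^-$ as $\tau\to-\infty$ does not converge to $\mathcal{O}$ as $\tau\to\infty$.
   Context: For frozen parameter values, the positive equilibria are the points $(v,v/(v+c))$ with $v>0$ a zero of $p(v,V_p,c)=(1-\gamma)(V_p/V_p^-)^2v+\gamma v^3-(v+c)^3$; $\mathcal{O}=(0,0)$ is always a stable equilibrium (non-storm state). Rate-induced tipping away from $\mathcal{S}^-$ to $\mathcal{O}$ means that for some rate $r>0$ the solution of the nonautonomous system limiting to $\mathcal{S}^-$ as $\tau\to-\infty$ fails to end-point track the stable path $p_s$ and instead converges to $\mathcal{O}$ as $\tau\to\infty$. *)

(* Defs.v *)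
From Stdlib Require Import Reals.
From Coquelicot Require Import Coquelicot.
Open Scope R_scope.

Definition C2 (f : R -> R) : Prop :=
  forall t, ex_derive f t /\ ex_derive (Derive f) t /\ continuous (Derive_n f 2) t.

Definition bi_asymp_const (f : R -> R) (lm lp : R) : Prop :=
  is_lim f m_infty lm /\ is_lim f p_infty lp /\
  is_lim (Derive f) m_infty 0 /\ is_lim (Derive f) p_infty 0.

Definition F1 (gamma : R) (Vp : R -> R) (Vpm lam v m : R) : R :=
  (1 - gamma) * (Vp lam) ^ 2 / Vpm ^ 2 * m ^ 3 - (1 - gamma * m ^ 3) * v ^ 2.
Definition F2 (c : R -> R) (lam v m : R) : R :=
  (1 - m) * v - c lam * m.

Definition equilibrium gamma Vp c Vpm lam (e : R * R) : Prop :=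
  F1 gamma Vp Vpm lam (fst e) (snd e) = 0 /\ F2 c lam (fst e) (snd e) = 0.

Definition J11 gamma Vp Vpm lam (e : R * R) : R :=
  Derive (fun v => F1 gamma Vp Vpm lam v (snd e)) (fst e).
Definition J12 gamma Vp Vpm lam (e : R * R) : R :=
  Derive (fun m => F1 gamma Vp Vpm lam (fst e) m) (snd e).
Definition J21 c lam (e : R * R) : R :=
  Derive (fun v => F2 c lam v (snd e)) (fst e).
Definition J22 c lam (e : R * R) : R :=
  Derive (fun m => F2 c lam (fst e) m) (snd e).

Definition jac_eigenvalue gamma Vp c Vpm lam (e : R * R) (z : C) : Prop :=
  Cminus (Cmult (Cminus (RtoC (J11 gamma Vp Vpm lam e)) z)
                (Cminus (RtoC (J22 c lam e)) z))
         (RtoC (J12 gamma Vp Vpm lam e * J21 c lam e)) = RtoC 0.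

Definition stable_eq gamma Vp c Vpm lam (e : R * R) : Prop :=
  equilibrium gamma Vp c Vpm lam e /\
  forall z : C, jac_eigenvalue gamma Vp c Vpm lam e z -> Re z < 0.

Definition saddle_eq gamma Vp c Vpm lam (e : R * R) : Prop :=
  equilibrium gamma Vp c Vpm lam e /\
  exists l1 l2 : R, l1 < 0 < l2 /\
    jac_eigenvalue gamma Vp c Vpm lam e (RtoC l1) /\
    jac_eigenvalue gamma Vp c Vpm lam e (RtoC l2).

Definition three_equilibria gamma Vp c Vpm lam (U S : R * R) : Prop :=
  0 < fst U /\ 0 < fst S /\
  saddle_eq gamma Vp c Vpm lam U /\ stable_eq gamma Vp c Vpm lam S /\
  (forall e : R * R, 0 <= fst e ->
     (equilibrium gamma Vp c Vpm lam e <-> e = (0, 0) \/ e = U \/ e = S)).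

Definition cvg_to (f : R -> R * R) (F : Rbar) (p : R * R) : Prop :=
  filterlim f (Rbar_locally F) (locally p).

Definition nonincreasing (f : R -> R) : Prop :=
  forall s t, s <= t -> f t <= f s.

(* Main.v *)
Require Import Defs.
From Stdlib Require Import Reals Lra Psatz Classical.
From Coquelicot Require Import Coquelicot.
Open Scope R_scope.
Definition phi (g x : R) := 3*x - 1 - 2*g*x^3.
Definition k2 (g x : R) := (1-x)^2*x/(1-g*x^3).

Lemma eig_det a b c d :
  (forall z : C, Cminus (Cmult (Cminus (RtoC a) z) (Cminus (RtoC d) z)) (RtoC (b*c)) = RtoC 0 -> Re z < 0) ->
  a*d - b*c > 0.
Proof.
  intros H. destruct (Rlt_or_le 0 (a*d - b*c)) as [|Hd]; auto. exfalso.
  set (tr := a + d). set (D := tr^2 - 4*(a*d-b*c)).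
  assert (HD : 0 <= D) by (unfold D; nra).
  set (s := sqrt D).
  assert (Hs2 : s*s = D) by (apply sqrt_sqrt; auto).
  assert (Hs0 : 0 <= s) by apply sqrt_pos.
  assert (Hs1 : tr <= s) by (unfold D in Hs2; nra).
  assert (Hs3 : -tr <= s) by (unfold D in Hs2; nra).
  set (z := (tr + s)/2).
  assert (Hz := H (RtoC z)).
  assert (Re (RtoC z) = z) by reflexivity.
  assert (0 <= z) by (unfold z; lra).
  assert (Cminus (Cmult (Cminus (RtoC a) (RtoC z)) (Cminus (RtoC d) (RtoC z))) (RtoC (b*c)) = RtoC 0).
  { unfold Cminus, Cmult, Cplus, Copp, RtoC; simpl.
    f_equal; [|ring].
    unfold z. unfold D, tr in Hs2. unfold tr. nra. }
  specialize (Hz H2). lra.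
Qed.

Lemma J11_val g Vp Vpm lam e : J11 g Vp Vpm lam e = -(1 - g*(snd e)^3)*(2*fst e).
Proof. unfold J11, F1. apply is_derive_unique. auto_derive; auto. ring. Qed.
Lemma J12_val g Vp Vpm lam e : J12 g Vp Vpm lam e =
  (1-g)*(Vp lam)^2/Vpm^2*(3*(snd e)^2) + g*(3*(snd e)^2)*(fst e)^2.
Proof. unfold J12, F1. apply is_derive_unique. auto_derive; auto. replace (Vpm*(Vpm*1)) with (Vpm^2) by ring. unfold Rdiv. ring. Qed.
Lemma J21_val c lam e : J21 c lam e = 1 - snd e.
Proof. unfold J21, F2. apply is_derive_unique. auto_derive; auto. ring. Qed.
Lemma J22_val c lam e : J22 c lam e = - fst e - c lam.
Proof. unfold J22, F2. apply is_derive_unique. auto_derive; auto. ring. Qed.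


Lemma stable_phi g Vp c Vpm lam e : 0 < fst e -> 0 < snd e ->
  stable_eq g Vp c Vpm lam e -> phi g (snd e) > 0.
Proof.
  intros Hv Hm [[E1 E2] Hst].
  assert (Hdet := eig_det _ _ _ _ Hst).
  rewrite J11_val, J12_val, J21_val, J22_val in Hdet.
  unfold F1, F2 in E1, E2.
  destruct e as [v m]; cbn [fst snd] in *.
  set (a := (1-g)*(Vp lam)^2/Vpm^2) in *.
  assert (Hid : m * (-(1 - g*m^3)*(2*v) * (-v - c lam) - (a*(3*m^2) + g*(3*m^2)*v^2)*(1-m))
      = v^2 * phi g m + 2*(1-g*m^3)*v*(c lam*m - (1-m)*v) - 3*(1-m)*(a*m^3 - (1-g*m^3)*v^2)).
  { unfold phi. ring. }
  assert (a * m^3 - (1 - g*m^3)*v^2 = 0) by lra.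
  assert (c lam * m - (1-m)*v = 0) by lra.
  rewrite H, H0 in Hid.
  assert (0 < m * (-(1 - g*m^3)*(2*v) * (-v - c lam) - (a*(3*m^2) + g*(3*m^2)*v^2)*(1-m)))
    by (apply Rmult_lt_0_compat; lra).
  destruct (Rle_or_lt (phi g m) 0); auto. nra.
Qed.

Lemma left_deriv f t0 l : derivable_pt_lim f t0 l ->
  (forall u, u < t0 -> f t0 <= f u) -> l <= 0.
Proof.
  intros H Hu. destruct (Rle_or_lt l 0) as [|Hl]; auto.
  destruct (H (l/2)) as [d Hd]; [lra|].
  assert (Hd0 := cond_pos d).
  set (h := -(d/2)).
  assert (Hh : h <> 0) by (unfold h; lra).
  assert (Ha : Rabs h < d) by (unfold h; rewrite Rabs_left; lra).
  specialize (Hd h Hh Ha).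
  assert (Hf := Hu (t0 + h) ltac:(unfold h; lra)).
  assert (Hq : (f (t0 + h) - f t0) / h <= 0).
  { unfold Rdiv. assert (/ h < 0) by (apply Rinv_lt_0_compat; unfold h; lra). nra. }
  apply Rabs_def2 in Hd. lra.
Qed.

Lemma dcont f t l : derivable_pt_lim f t l ->
  forall eps, 0 < eps -> exists d, 0 < d /\ forall u, Rabs (u - t) < d -> Rabs (f u - f t) < eps.
Proof.
  intros H eps He.
  assert (Hc : continuity_pt f t) by (apply derivable_continuous_pt; exists l; exact H).
  destruct (Hc eps He) as [d [Hd Hd']].
  exists d; split; auto. intros u Hu.
  destruct (Req_dec u t) as [->|Hne].
  - rewrite Rminus_eq_0, Rabs_R0; auto.
  - apply (Hd' u). split. split; [exact I | auto]. exact Hu.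
Qed.

Lemma invariance (v m dv dm s : R -> R) (w mu : R) :
  0 <= w ->
  (forall t, derivable_pt_lim v t (dv t)) -> (forall t, derivable_pt_lim m t (dm t)) ->
  (forall x y, x <= y -> s y <= s x) ->
  (forall t, v t = s t * w -> mu <= m t -> 0 < dv t) ->
  (forall t, m t = mu -> s t * w <= v t -> 0 < dm t) ->
  (exists T, forall t, t <= T -> s t * w < v t /\ mu < m t) ->
  forall t, mu < m t.
Proof.
  intros Hw Hv Hm Hs H1 H2 [T HT] t1.
  destruct (Rlt_or_le mu (m t1)) as [|Hbad]; auto. exfalso.
  set (E := fun x => forall u, u <= x -> s u * w < v u /\ mu < m u).
  assert (HE : bound E).
  { exists t1. intros x Ex. destruct (Rle_or_lt x t1); auto.
    destruct (Ex t1); lra. }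
  destruct (completeness E HE) as [t0 [Hub Hlub]].
  { exists T. intros u Hu. apply HT; auto. }
  assert (F1 : forall u, u < t0 -> s u * w < v u /\ mu < m u).
  { intros u Hu. apply NNPP. intro Hn.
    assert (t0 <= u); [|lra]. apply Hlub. intros x Ex.
    destruct (Rle_or_lt x u) as [|Hx]; auto. exfalso. apply Hn. apply Ex. lra. }
  assert (F2 : s t0 * w <= v t0).
  { destruct (Rle_or_lt (s t0 * w) (v t0)) as [|Hc]; auto. exfalso.
    destruct (dcont _ _ _ (Hv t0) (s t0 * w - v t0)) as [d [Hd Hd']]; [lra|].
    assert (Hu := Hd' (t0 - d/2) ltac:(rewrite Rabs_left; lra)).
    destruct (F1 (t0 - d/2)) as [Ha _]; [lra|].
    assert (s t0 * w <= s (t0 - d/2) * w) by (apply Rmult_le_compat_r; auto; apply Hs; lra).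
    apply Rabs_def2 in Hu. lra. }
  assert (F3 : mu <= m t0).
  { destruct (Rle_or_lt mu (m t0)) as [|Hc]; auto. exfalso.
    destruct (dcont _ _ _ (Hm t0) (mu - m t0)) as [d [Hd Hd']]; [lra|].
    assert (Hu := Hd' (t0 - d/2) ltac:(rewrite Rabs_left; lra)).
    destruct (F1 (t0 - d/2)) as [_ Ha]; [lra|].
    apply Rabs_def2 in Hu. lra. }
  assert (F4 : ~ (s t0 * w < v t0 /\ mu < m t0)).
  { intros [Ga Gb].
    destruct (dcont _ _ _ (Hv t0) (v t0 - s t0 * w)) as [d1 [Hd1 Hd1']]; [lra|].
    destruct (dcont _ _ _ (Hm t0) (m t0 - mu)) as [d2 [Hd2 Hd2']]; [lra|].
    set (d := Rmin d1 d2).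
    assert (d <= d1) by apply Rmin_l. assert (d <= d2) by apply Rmin_r.
    assert (0 < d) by (apply Rmin_glb_lt; auto).
    assert (E (t0 + d/2)).
    { intros u Hu. destruct (Rlt_or_le u t0) as [Hu'|Hu']; [apply F1; auto|].
      assert (Hr : Rabs (u - t0) < d) by (rewrite Rabs_right; lra).
      assert (A1 := Hd1' u ltac:(lra)). assert (A2 := Hd2' u ltac:(lra)).
      apply Rabs_def2 in A1. apply Rabs_def2 in A2.
      assert (s u * w <= s t0 * w) by (apply Rmult_le_compat_r; auto).
      split; lra. }
    assert (t0 + d/2 <= t0) by (apply Hub; auto). lra. }
  destruct (Rle_lt_or_eq_dec _ _ F2) as [Hlt|Heq].
  - destruct (Rle_lt_or_eq_dec _ _ F3) as [Hlt'|Heq']; [tauto|].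
    assert (Hp := H2 t0 (eq_sym Heq') F2).
    assert (dm t0 <= 0); [|lra].
    apply (left_deriv m t0); auto. intros u Hu. destruct (F1 u Hu). lra.
  - assert (Hp := H1 t0 (eq_sym Heq) F3).
    assert (dv t0 <= 0); [|lra].
    apply (left_deriv v t0); auto. intros u Hu. destruct (F1 u Hu).
    assert (s t0 * w <= s u * w) by (apply Rmult_le_compat_r; auto; apply Hs; lra). lra.
Qed.


Lemma cube_lt1 g x : 0 <= g < 1 -> 0 <= x <= 1 -> 0 < 1 - g*x^3.
Proof. intros. assert (x^3 <= 1). { assert (0 <= x^3) by (apply pow_le; lra).
  replace 1 with (1^3) by ring. apply pow_incr; lra. } nra. Qed.

Lemma phi_interval g mu c : 0 <= g < 1 -> 0 < mu -> phi g mu > 0 -> mu <= c < 1 -> phi g c > 0.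
Proof.
  intros Hg Hmu Hp Hc.
  assert (Hid : (1-mu)*phi g c = (1-c)*phi g mu + (c-mu)*phi g 1 + 2*g*(1-c)*(c-mu)*(1-mu)*(1+mu+c))
    by (unfold phi; ring).
  assert (phi g 1 > 0) by (unfold phi; lra).
  assert (0 < (1-c)*phi g mu) by (apply Rmult_lt_0_compat; lra).
  assert (0 <= (c-mu)*phi g 1) by (apply Rmult_le_pos; lra).
  assert (0 <= 2*g*(1-c)*(c-mu)*(1-mu)*(1+mu+c)).
  { repeat apply Rmult_le_pos; lra. }
  assert (0 < (1-mu)*phi g c) by lra.
  destruct (Rle_or_lt (phi g c) 0); auto. nra.
Qed.

Lemma k2_dec g mu y : 0 <= g < 1 -> 0 < mu -> phi g mu > 0 -> mu < y < 1 -> k2 g y < k2 g mu.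
Proof.
  intros Hg Hmu Hp Hy.
  destruct (MVT_cor2 (k2 g) (fun x => -(1-x)*phi g x/(1-g*x^3)^2) mu y) as [c [Hc Hc']].
  - lra.
  - intros c Hc. apply is_derive_Reals. unfold k2.
    assert (0 < 1 - g*c^3) by (apply cube_lt1; lra).
    auto_derive. lra. unfold phi. field. lra.
  - assert (phi g c > 0) by (apply (phi_interval g mu); lra).
    assert (0 < 1 - g*c^3) by (apply cube_lt1; lra).
    assert (0 < (1-c)*phi g c/(1-g*c^3)^2).
    { unfold Rdiv. apply Rmult_lt_0_compat. apply Rmult_lt_0_compat; lra.
      apply Rinv_0_lt_compat. apply pow_lt; lra. }
    assert (Heq : - (1 - c) * phi g c / (1 - g * c ^ 3) ^ 2 = - ((1-c)*phi g c/(1-g*c^3)^2)) by (unfold Rdiv; ring).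
    rewrite Heq in Hc. nra.
Qed.

Lemma ball_R (x y e : R) : ball x e y -> Rabs (y - x) < e.
Proof. intro H. exact H. Qed.

Lemma cvg_m_eps f p : cvg_to f m_infty p -> forall eps, 0 < eps ->
  exists T, forall t, t < T -> Rabs (fst (f t) - fst p) < eps /\ Rabs (snd (f t) - snd p) < eps.
Proof.
  intros H eps He.
  destruct (H (ball p (mkposreal eps He)) (locally_ball _ _)) as [T HT].
  exists T. intros t Ht. destruct (HT t Ht) as [H1 H2].
  split; apply ball_R; assumption.
Qed.

Lemma cvg_p_eps f p : cvg_to f p_infty p -> forall eps, 0 < eps ->
  exists T, forall t, T < t -> Rabs (fst (f t) - fst p) < eps /\ Rabs (snd (f t) - snd p) < eps.
Proof.
  intros H eps He.
  destruct (H (ball p (mkposreal eps He)) (locally_ball _ _)) as [T HT].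
  exists T. intros t Ht. destruct (HT t Ht) as [H1 H2].
  split; apply ball_R; assumption.
Qed.

Lemma lim_scaled f (L r : R) : is_lim f m_infty L -> 0 < r -> forall eps, 0 < eps ->
  exists T, forall t, t < T -> Rabs (f (r*t) - L) < eps.
Proof.
  intros H Hr eps He. apply is_lim_spec in H. simpl in H.
  destruct (H (mkposreal eps He)) as [M HM].
  exists (M / r). intros t Ht. apply HM.
  apply (Rmult_lt_compat_l r) in Ht; auto. field_simplify in Ht; lra.
Qed.

Lemma mono_bound (s : R -> R) L : (forall x y, x <= y -> s y <= s x) ->
  (forall eps, 0 < eps -> exists T, forall t, t < T -> Rabs (s t - L) < eps) ->
  forall t, s t <= L.
Proof.
  intros Hs Hl t. destruct (Rle_or_lt (s t) L) as [|Hc]; auto. exfalso.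
  destruct (Hl (s t - L)) as [T HT]; [lra|].
  set (u := Rmin T t - 1).
  assert (u < T) by (unfold u; generalize (Rmin_l T t); lra).
  assert (u <= t) by (unfold u; generalize (Rmin_r T t); lra).
  specialize (HT u H). apply Rabs_def2 in HT. specialize (Hs u t H0). lra.
Qed.

Lemma cont_snd (ps : R -> R * R) t : continuous ps t -> continuity_pt (fun t => snd (ps t)) t.
Proof.
  intro H. apply continuity_pt_filterlim.
  apply (filterlim_comp _ _ _ ps snd (locally t) (locally (ps t))); auto.
  assert (Hs := continuous_snd (U:=R_UniformSpace) (V:=R_UniformSpace) (fst (ps t)) (snd (ps t))).
  rewrite <- surjective_pairing in Hs. exact Hs.
Qed.

Lemma phi_cont_pos g x0 : phi g x0 > 0 -> exists d, 0 < d /\ forall x, Rabs (x - x0) < d -> phi g x > 0.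
Proof.
  intro H.
  assert (Hd : derivable_pt_lim (phi g) x0 (3 - 6*g*x0^2)).
  { apply is_derive_Reals. unfold phi. auto_derive; auto. ring. }
  destruct (dcont _ _ _ Hd (phi g x0)) as [d [Hd0 Hd1]]; [lra|].
  exists d; split; auto. intros x Hx. specialize (Hd1 x Hx). apply Rabs_def2 in Hd1. lra.
Qed.

Lemma lower_env (g : R -> R) (Q : R -> Prop) gm gp :
  (forall t, continuity_pt g t) ->
  (forall eps, 0 < eps -> exists T, forall t, t < T -> Rabs (g t - gm) < eps) ->
  (forall eps, 0 < eps -> exists T, forall t, T < t -> Rabs (g t - gp) < eps) ->
  (forall t, Q (g t)) ->
  (exists e, 0 < e /\ forall x, Rabs (x - gm) < e -> Q x) ->
  (exists e, 0 < e /\ forall x, Rabs (x - gp) < e -> Q x) ->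
  exists M, Q M /\ M <= gm /\ forall t, M <= g t.
Proof.
  intros Hc Hm Hp HQ [e1 [He1 Q1]] [e2 [He2 Q2]].
  destruct (Hm (e1/2)) as [T1 HT1]; [lra|].
  destruct (Hp (e2/2)) as [T2 HT2]; [lra|].
  destruct (continuity_ab_min g (Rmin T1 T2) (Rmax T1 T2)) as [x [Hx1 Hx2]].
  { apply Rle_trans with T1; [apply Rmin_l|apply Rmax_l]. }
  { intros; auto. }
  set (M := Rmin (Rmin (gm - e1/2) (gp - e2/2)) (g x)).
  exists M. split; [|split].
  - unfold M. apply Rmin_case; [apply Rmin_case|].
    + apply Q1. rewrite Rabs_left; lra.
    + apply Q2. rewrite Rabs_left; lra.
    + apply HQ.
  - unfold M. apply Rle_trans with (Rmin (gm - e1/2) (gp - e2/2)); [apply Rmin_l|].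
    apply Rle_trans with (gm - e1/2); [apply Rmin_l|lra].
  - intro t. unfold M.
    destruct (Rlt_or_le t T1) as [Ht|Ht].
    + specialize (HT1 t Ht). apply Rabs_def2 in HT1.
      apply Rle_trans with (Rmin (gm - e1/2) (gp - e2/2)); [apply Rmin_l|].
      apply Rle_trans with (gm - e1/2); [apply Rmin_l|lra].
    + destruct (Rlt_or_le T2 t) as [Ht'|Ht'].
      * specialize (HT2 t Ht'). apply Rabs_def2 in HT2.
        apply Rle_trans with (Rmin (gm - e1/2) (gp - e2/2)); [apply Rmin_l|].
        apply Rle_trans with (gp - e2/2); [apply Rmin_r|lra].
      * apply Rle_trans with (g x); [apply Rmin_r|]. apply Hx1. split.
        apply Rle_trans with T1; [apply Rmin_l|lra].
        apply Rle_trans with T2; [lra|apply Rmax_r].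
Qed.

Lemma eq_props g Vp c Vpm lam v m : 0 <= g < 1 -> 0 < v -> 0 < c lam -> Vpm <> 0 ->
  equilibrium g Vp c Vpm lam (v, m) ->
  0 < m < 1 /\ (c lam)^2 = (1-g)/Vpm^2 * (Vp lam)^2 * k2 g m.
Proof.
  intros Hg Hv Hc HV [E1 E2]. unfold F1, F2 in E1, E2. cbn [fst snd] in E1, E2.
  assert (Hm : 0 < m < 1) by (split; nra).
  split; auto.
  assert (Hcm : c lam = (1-m)*v/m) by (field_simplify_eq; lra).
  assert (Hd : 0 < 1 - g*m^3) by (apply cube_lt1; lra).
  assert (Hv2 : v^2 * (1 - g*m^3) = (1-g)/Vpm^2 * (Vp lam)^2 * m^3) by (unfold Rdiv in *; lra).
  assert (Ha : (1-g)/Vpm^2 * (Vp lam)^2 = v^2 * (1 - g*m^3) / m^3).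
  { rewrite Hv2. field. lra. }
  rewrite Ha, Hcm. unfold k2. field. split; lra.
Qed.

Lemma sq_lt a b : 0 <= a -> 0 <= b -> a^2 < b^2 -> a < b.
Proof. intros. nra. Qed.

Lemma start (v m s : R -> R) L w p mu : (forall t, s t <= L) -> 0 <= w -> L*w < fst p -> mu < snd p ->
  cvg_to (fun t => (v t, m t)) m_infty p -> exists T, forall t, t <= T -> s t * w < v t /\ mu < m t.
Proof.
  intros Hs Hw HL Hmu Hc.
  destruct (cvg_m_eps _ _ Hc (Rmin (fst p - L*w) (snd p - mu))) as [T HT].
  { apply Rmin_glb_lt; lra. }
  exists (T - 1). intros t Ht. destruct (HT t ltac:(lra)) as [H1 H2]. cbn [fst snd] in H1, H2.
  apply Rabs_def2 in H1. apply Rabs_def2 in H2.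
  assert (Rmin (fst p - L*w) (snd p - mu) <= fst p - L*w) by apply Rmin_l.
  assert (Rmin (fst p - L*w) (snd p - mu) <= snd p - mu) by apply Rmin_r.
  assert (s t * w <= L * w) by (apply Rmult_le_compat_r; auto).
  split; lra.
Qed.

Lemma finish (v m : R -> R) mu : 0 < mu -> cvg_to (fun t => (v t, m t)) p_infty (0, 0) ->
  (forall t, mu < m t) -> False.
Proof.
  intros Hmu Hc H. destruct (cvg_p_eps _ _ Hc mu Hmu) as [T HT].
  destruct (HT (T+1) ltac:(lra)) as [_ H2]. cbn [fst snd] in H2.
  apply Rabs_def2 in H2. specialize (H (T+1)). lra.
Qed.


Theorem theorem3p8 (gamma : R) (Lam Vp c : R -> R) (lm lp Vpm : R)
  (Um Sm Up Sp : R * R) :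
  0 <= gamma <= 1 ->
  C2 Lam ->
  (forall s t, s <= t -> Lam s <= Lam t) ->
  bi_asymp_const Lam lm lp ->
  (forall x, continuous Vp x) -> (forall x, continuous c x) ->
  (forall t, 0 < Vp (Lam t)) -> (forall t, 0 < c (Lam t)) ->
  is_lim (fun t => Vp (Lam t)) m_infty Vpm -> 0 < Vpm ->
  three_equilibria gamma Vp c Vpm lm Um Sm ->
  three_equilibria gamma Vp c Vpm lp Up Sp ->
  forall r : R, 0 < r ->
  forall pu ps : R -> R * R,
  (forall t, continuous pu t) -> (forall t, continuous ps t) ->
  (forall t, 0 < fst (pu t) /\ saddle_eq gamma Vp c Vpm (Lam (r * t)) (pu t)) ->
  (forall t, 0 < fst (ps t) /\ stable_eq gamma Vp c Vpm (Lam (r * t)) (ps t)) ->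
  (forall t, pu t <> ps t) ->
  cvg_to pu m_infty Um -> cvg_to pu p_infty Up ->
  cvg_to ps m_infty Sm -> cvg_to ps p_infty Sp ->
  (nonincreasing (fun t => Vp (Lam (r * t))) \/
   nonincreasing (fun t => c (Lam (r * t)))) ->
  forall v m : R -> R,
  (forall t, is_derive v t
     ((1 - gamma) * (Vp (Lam (r * t))) ^ 2 / Vpm ^ 2 * (m t) ^ 3
      - (1 - gamma * (m t) ^ 3) * (v t) ^ 2)) ->
  (forall t, is_derive m t ((1 - m t) * v t - c (Lam (r * t)) * m t)) ->
  cvg_to (fun t => (v t, m t)) m_infty Sm ->
  ~ cvg_to (fun t => (v t, m t)) p_infty (0, 0).
Proof.
  intros Hg _ _ Hbi HVpc Hcc HVpos Hcpos HVlim HVpm Hthm Hthp r Hr pu ps _ Hpsc _ Hps _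
    _ _ Hpsm Hpsp Hmono v m Hdv Hdm Hcvm Hcvp.
  set (P := fun t => Vp (Lam (r*t))). set (Q := fun t => c (Lam (r*t))).
  assert (HVm0 : Vpm <> 0) by lra.
  assert (Hg1 : gamma < 1).
  { destruct (Hps 0) as [Hv0 [[E1 E2] _]]. unfold F1, F2 in E1, E2.
    set (v0 := fst (ps 0)) in *. set (m0 := snd (ps 0)) in *.
    assert (Hc0 := Hcpos (r*0)).
    assert (0 < m0 < 1) by (split; nra).
    destruct (Rlt_or_le gamma 1) as [|Hge]; auto.
    assert (gamma = 1) by lra. subst gamma.
    assert (m0*m0 < 1) by nra. assert (m0^3 < 1) by (simpl; nra).
    assert (0 < v0^2) by nra.
    replace ((1 - 1) * Vp (Lam (r * 0)) ^ 2 / Vpm ^ 2 * m0 ^ 3) with 0 in E1 by (unfold Rdiv; ring).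
    nra. }
  assert (Hg' : 0 <= gamma < 1) by lra.
  set (A := (1-gamma)/Vpm^2).
  assert (HA : 0 < A).
  { unfold A, Rdiv. apply Rmult_lt_0_compat; [lra|]. apply Rinv_0_lt_compat. apply pow_lt. lra. }
  destruct Hbi as [HLm [HLp _]].
  assert (HVlm : Vp lm = Vpm).
  { assert (H1 := is_lim_comp_continuous Lam Vp m_infty lm HLm (HVpc lm)).
    apply is_lim_unique in H1. apply is_lim_unique in HVlim. rewrite H1 in HVlim.
    injection HVlim; auto. }
  assert (HQlim : is_lim (fun t => c (Lam t)) m_infty (c lm))
    by (apply is_lim_comp_continuous; auto).
  assert (Hpsf : forall t, 0 < snd (ps t) < 1 /\ phi gamma (snd (ps t)) > 0 /\
                 (Q t)^2 = A * (P t)^2 * k2 gamma (snd (ps t))).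
  { intro t. destruct (Hps t) as [Hv Hst].
    assert (Hep := eq_props gamma Vp c Vpm (Lam (r*t)) (fst (ps t)) (snd (ps t)) Hg' Hv (Hcpos _) HVm0).
    rewrite <- surjective_pairing in Hep. destruct (Hep (proj1 Hst)) as [Hm Hc].
    split; auto. split; [apply (stable_phi gamma Vp c Vpm (Lam (r*t))); auto; lra|].
    exact Hc. }
  set (g := fun t => snd (ps t)).
  assert (Hgm : forall eps, 0 < eps -> exists T, forall t, t < T -> Rabs (g t - snd Sm) < eps).
  { intros eps He. destruct (cvg_m_eps _ _ Hpsm eps He) as [T HT]. exists T. intros t Ht.
    apply (HT t Ht). }
  assert (Hgp : forall eps, 0 < eps -> exists T, forall t, T < t -> Rabs (g t - snd Sp) < eps).
  { intros eps He. destruct (cvg_p_eps _ _ Hpsp eps He) as [T HT]. exists T. intros t Ht.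
    apply (HT t Ht). }
  destruct Hthm as [_ [HvSm [_ [HstSm _]]]].
  destruct Hthp as [_ [HvSp [_ [HstSp _]]]].
  assert (HmSm : 0 < snd Sm).
  { destruct (Rlt_or_le 0 (snd Sm)) as [|Hle]; auto. exfalso.
    destruct (Rle_lt_or_eq_dec _ _ Hle) as [Hlt|Heq].
    - destruct (Hgm (- snd Sm)) as [T HT]; [lra|].
      specialize (HT (T-1) ltac:(lra)). apply Rabs_def2 in HT.
      destruct (Hpsf (T-1)) as [[H0 _] _]. unfold g in HT. lra.
    - destruct HstSm as [[_ E2] _]. unfold F2 in E2. rewrite Heq in E2. lra. }
  assert (HmSp : 0 < snd Sp).
  { destruct (Rlt_or_le 0 (snd Sp)) as [|Hle]; auto. exfalso.
    destruct (Rle_lt_or_eq_dec _ _ Hle) as [Hlt|Heq].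
    - destruct (Hgp (- snd Sp)) as [T HT]; [lra|].
      specialize (HT (T+1) ltac:(lra)). apply Rabs_def2 in HT.
      destruct (Hpsf (T+1)) as [[H0 _] _]. unfold g in HT. lra.
    - destruct HstSp as [[_ E2] _]. unfold F2 in E2. rewrite Heq in E2. lra. }
  assert (HphSm : phi gamma (snd Sm) > 0) by (apply (stable_phi gamma Vp c Vpm lm); auto; lra).
  assert (HphSp : phi gamma (snd Sp) > 0) by (apply (stable_phi gamma Vp c Vpm lp); auto; lra).
  destruct (lower_env g (fun x => 0 < x /\ phi gamma x > 0) (snd Sm) (snd Sp)) as [M [[HM0 HMp] [HMle HMg]]].
  { intro t. apply cont_snd. auto. }
  { exact Hgm. }
  { exact Hgp. }
  { intro t. destruct (Hpsf t) as [[H0 _] [H1 _]]. split; auto. }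
  { destruct (phi_cont_pos gamma _ HphSm) as [d [Hd Hd']].
    exists (Rmin d (snd Sm)). split; [apply Rmin_glb_lt; auto|].
    intros x Hx. assert (Rmin d (snd Sm) <= d) by apply Rmin_l.
    assert (Rmin d (snd Sm) <= snd Sm) by apply Rmin_r.
    split; [apply Rabs_def2 in Hx; lra|apply Hd'; lra]. }
  { destruct (phi_cont_pos gamma _ HphSp) as [d [Hd Hd']].
    exists (Rmin d (snd Sp)). split; [apply Rmin_glb_lt; auto|].
    intros x Hx. assert (Rmin d (snd Sp) <= d) by apply Rmin_l.
    assert (Rmin d (snd Sp) <= snd Sp) by apply Rmin_r.
    split; [apply Rabs_def2 in Hx; lra|apply Hd'; lra]. }
  assert (HM1 : M < 1).
  { specialize (HMg 0). destruct (Hpsf 0) as [[_ H1] _]. unfold g in HMg. lra. }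
  destruct (phi_cont_pos gamma M HMp) as [d3 [Hd3 Hd3']].
  set (mu := Rmax (M/2) (M - d3/2)).
  assert (Hmu0 : 0 < mu) by (unfold mu; generalize (Rmax_l (M/2) (M - d3/2)); lra).
  assert (Hmu1 : mu < M) by (unfold mu; apply Rmax_lub_lt; lra).
  assert (Hmup : phi gamma mu > 0).
  { apply Hd3'. rewrite Rabs_left by lra.
    unfold mu; generalize (Rmax_r (M/2) (M - d3/2)); lra. }
  assert (Hk2 : forall t, (Q t)^2 <= A * (P t)^2 * k2 gamma M).
  { intro t. destruct (Hpsf t) as [[Hm0 Hm1] [_ Heq]]. rewrite Heq.
    apply Rmult_le_compat_l; [apply Rmult_le_pos; [lra|apply pow2_ge_0]|].
    destruct (Rle_lt_or_eq_dec M (g t) (HMg t)) as [Hlt|Heq'].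
    - left. apply k2_dec; auto; unfold g in *; lra.
    - right. unfold g in Heq'. rewrite Heq'. reflexivity. }
  assert (Hk2M : k2 gamma M < k2 gamma mu) by (apply k2_dec; auto; lra).
  assert (Hden : 0 < 1 - gamma*mu^3) by (apply cube_lt1; lra).
  assert (HdenM : 0 < 1 - gamma*M^3) by (apply cube_lt1; lra).
  assert (Hk2M0 : 0 < k2 gamma M).
  { unfold k2, Rdiv. apply Rmult_lt_0_compat; [|apply Rinv_0_lt_compat; auto].
    apply Rmult_lt_0_compat; auto. apply pow_lt. lra. }
  assert (Hk2mu : k2 gamma mu = (1-mu)^2*mu/(1-gamma*mu^3)) by reflexivity.
  assert (Hdv' : forall t, derivable_pt_lim v t
     ((1 - gamma) * (Vp (Lam (r * t))) ^ 2 / Vpm ^ 2 * (m t) ^ 3 - (1 - gamma * (m t) ^ 3) * (v t) ^ 2)).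
  { intro t. apply is_derive_Reals. apply Hdv. }
  assert (Hdm' : forall t, derivable_pt_lim m t ((1 - m t) * v t - c (Lam (r * t)) * m t)).
  { intro t. apply is_derive_Reals. apply Hdm. }
  assert (HAP : forall t, (1 - gamma) * (Vp (Lam (r * t))) ^ 2 / Vpm ^ 2 = A * (P t)^2).
  { intro t. unfold A, P. field. auto. }
  assert (HPpos : forall t, 0 < P t) by (intro t; apply HVpos).
  assert (HQpos : forall t, 0 < Q t) by (intro t; apply Hcpos).
  idtac.
  destruct HstSm as [[E1m E2m] _]. unfold F1, F2 in E1m, E2m. rewrite HVlm in E1m.
  set (vS := fst Sm) in *. set (mS := snd Sm) in *.
  assert (HmSmu : mu < mS) by lra.
  destruct Hmono as [HmonoA | HmonoB].
  -
    assert (HPb : forall t, P t <= Vpm).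
    { apply mono_bound; [exact HmonoA|].
      exact (lim_scaled (fun t => Vp (Lam t)) Vpm r HVlim Hr). }
    set (X := A*mu^3/(1-gamma*mu^3)).
    set (Y2 := mu^2*A*k2 gamma M/(1-mu)^2).
    assert (Hmu1' : 0 < 1 - mu) by lra.
    assert (HXe : X = mu^2*A*k2 gamma mu/(1-mu)^2) by (unfold X; rewrite Hk2mu; field; lra).
    assert (HYX : Y2 < X).
    { rewrite HXe. unfold Y2, Rdiv. apply Rmult_lt_compat_r.
      apply Rinv_0_lt_compat; apply pow_lt; lra.
      apply Rmult_lt_compat_l; auto. apply Rmult_lt_0_compat; [apply pow_lt; lra|auto]. }
    assert (HY0 : 0 <= Y2).
    { unfold Y2, Rdiv. apply Rmult_le_pos; [|left; apply Rinv_0_lt_compat; apply pow_lt; lra].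
      apply Rmult_le_pos; [apply Rmult_le_pos; [apply pow2_ge_0|lra]|lra]. }
    set (W := (Y2 + X)/2).
    assert (HW0 : 0 < W) by (unfold W; lra).
    set (w := sqrt W).
    assert (Hw2 : w * w = W) by (apply sqrt_sqrt; lra).
    assert (Hw0 : 0 <= w) by apply sqrt_pos.
    assert (HWX : A*mu^3 - (1-gamma*mu^3)*W > 0).
    { assert (W < X) by (unfold W; lra).
      assert (Hx : X * (1-gamma*mu^3) = A*mu^3) by (unfold X; field; lra).
      nra. }
    apply (finish v m mu Hmu0 Hcvp).
    apply (invariance v m _ _ P w mu Hw0 Hdv' Hdm' HmonoA).
    + intros t Hvt Hmt.
      rewrite HAP.
      assert (Hm3 : mu^3 <= m t ^3) by (apply pow_incr; lra).
      assert (Hmu3 : 0 < mu^3) by (apply pow_lt; lra).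
      assert (HP2 : 0 < P t ^2) by (apply pow_lt; auto).
      assert (Hv2 : v t ^2 = P t^2 * W) by (rewrite Hvt, <- Hw2; ring).
      rewrite Hv2.
      assert (A * P t^2 * mu^3 <= A * P t^2 * m t^3)
        by (apply Rmult_le_compat_l; [apply Rmult_le_pos; lra|auto]).
      assert ((1 - gamma * m t ^ 3) * (P t ^ 2 * W) <= (1 - gamma * mu ^ 3) * (P t ^ 2 * W)).
      { apply Rmult_le_compat_r; [apply Rmult_le_pos; lra|]. nra. }
      assert (0 < P t ^2 * (A*mu^3 - (1-gamma*mu^3)*W)) by (apply Rmult_lt_0_compat; lra).
      nra.
    + intros t Hmt Hvt. rewrite Hmt.
      assert (HQmu : Q t * mu < (1 - mu) * P t * w).
      { apply sq_lt.
        - apply Rmult_le_pos; left; auto.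
        - apply Rmult_le_pos; [apply Rmult_le_pos; [lra|left; auto]|auto].
        - assert (Hq := Hk2 t).
          assert (HYe : Y2 * (1-mu)^2 = mu^2*A*k2 gamma M) by (unfold Y2; field; lra).
          assert (HP2 : 0 < P t ^2) by (apply pow_lt; auto).
          replace ((Q t * mu)^2) with (Q t ^2 * mu^2) by ring.
          replace (((1 - mu) * P t * w)^2) with ((1-mu)^2 * P t^2 * (w*w)) by ring.
          rewrite Hw2.
          apply Rle_lt_trans with (A * P t ^ 2 * k2 gamma M * mu^2).
          + apply Rmult_le_compat_r; auto. apply pow2_ge_0.
          + assert (A * P t ^ 2 * k2 gamma M * mu^2 = Y2 * (1-mu)^2 * P t^2) by (rewrite HYe; ring).
            rewrite H. assert (0 < (1-mu)^2 * P t^2) by (apply Rmult_lt_0_compat; [apply pow_lt; lra|auto]).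
            assert (W - Y2 > 0) by (unfold W; lra). nra. }
      unfold Q in HQmu.
      assert ((1 - mu) * (P t * w) <= (1 - mu) * v t) by (apply Rmult_le_compat_l; lra).
      unfold P in *. nra.
    + apply (start v m P Vpm w Sm mu HPb Hw0); [|exact HmSmu|exact Hcvm].
      change (Vpm * w < vS).
      apply sq_lt; [apply Rmult_le_pos; lra| lra|].
      replace ((Vpm * w)^2) with (Vpm^2 * (w*w)) by ring. rewrite Hw2.
      replace ((1 - gamma) * Vpm ^ 2 / Vpm ^ 2) with (1 - gamma) in E1m by (field; auto).
      assert (HmS3 : mu^3 <= mS^3) by (apply pow_incr; lra).
      assert (Hmu3 : 0 < mu^3) by (apply pow_lt; lra).
      assert (HV2 : 0 < Vpm^2) by (apply pow_lt; lra).
      assert (HAV : A * Vpm^2 = 1 - gamma) by (unfold A; field; auto).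
      assert (HvS2 : 0 < vS^2) by (apply pow_lt; lra).
      assert (HdS : 0 < 1 - gamma * mS^3).
      { assert (0 < (1-gamma)*mS^3) by (apply Rmult_lt_0_compat; [lra|apply pow_lt; lra]). nra. }
      destruct (Rlt_or_le (Vpm^2*W) (vS^2)) as [|Hc]; auto. exfalso.
      assert (H1 : (1 - gamma) * mS^3 <= (1 - gamma*mS^3) * (Vpm^2 * W))
        by (replace ((1-gamma)*mS^3) with ((1-gamma*mS^3)*vS^2) by lra; apply Rmult_le_compat_l; lra).
      assert (H2 : (1 - gamma*mS^3) * (Vpm^2*W) <= (1 - gamma*mu^3) * (Vpm^2*W))
        by (apply Rmult_le_compat_r; [apply Rmult_le_pos; lra|nra]).
      assert (H3 : (1 - gamma*mu^3) * (Vpm^2*W) < (1-gamma)*mu^3).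
      { rewrite <- HAV. assert (0 < Vpm^2 * (A*mu^3 - (1-gamma*mu^3)*W)) by (apply Rmult_lt_0_compat; lra). nra. }
      assert ((1-gamma)*mu^3 <= (1-gamma)*mS^3) by (apply Rmult_le_compat_l; lra).
      lra.
  -
    assert (HQb : forall t, Q t <= c lm).
    { apply mono_bound; [exact HmonoB|].
      exact (lim_scaled (fun t => c (Lam t)) (c lm) r HQlim Hr). }
    assert (Hmu1' : 0 < 1 - mu) by lra.
    set (Z := mu^3/((1-gamma*mu^3)*k2 gamma M)).
    set (w0 := mu/(1-mu)).
    assert (Hw00 : 0 < w0) by (unfold w0; apply Rdiv_lt_0_compat; lra).
    assert (Hw0Z : w0^2 < Z).
    { assert (Hk2mu0 : (1-gamma*mu^3) * k2 gamma mu = (1-mu)^2*mu) by (rewrite Hk2mu; field; lra).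
      assert (He : w0^2 = mu^3 * / ((1-gamma*mu^3) * k2 gamma mu)).
      { rewrite Hk2mu0. unfold w0. field. lra. }
      rewrite He. unfold Z, Rdiv. apply Rmult_lt_compat_l; [apply pow_lt; lra|].
      apply Rinv_lt_contravar.
      - apply Rmult_lt_0_compat; apply Rmult_lt_0_compat; auto; lra.
      - apply Rmult_lt_compat_l; auto. }
    assert (HZ0 : 0 < Z) by (generalize (pow2_ge_0 w0); lra).
    assert (HsZ : sqrt Z * sqrt Z = Z) by (apply sqrt_sqrt; lra).
    assert (HsZ0 : 0 <= sqrt Z) by apply sqrt_pos.
    assert (Hw0s : w0 < sqrt Z).
    { destruct (Rlt_or_le w0 (sqrt Z)) as [|Hc]; auto. exfalso.
      assert (sqrt Z * sqrt Z <= w0 * w0) by (apply Rmult_le_compat; lra). simpl in Hw0Z. lra. }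
    assert (Hw0M : w0 < M/(1-mu)).
    { unfold w0, Rdiv. apply Rmult_lt_compat_r; [apply Rinv_0_lt_compat; lra|lra]. }
    set (R0 := Rmin (M/(1-mu)) (sqrt Z)).
    assert (HR0 : w0 < R0) by (apply Rmin_glb_lt; auto).
    assert (HR1 : R0 <= M/(1-mu)) by apply Rmin_l.
    assert (HR2 : R0 <= sqrt Z) by apply Rmin_r.
    set (w := (w0 + R0)/2).
    assert (Hw0 : 0 <= w) by (unfold w; lra).
    assert (Hww0 : w0 < w) by (unfold w; lra).
    assert (HwZ : w * w < Z).
    { assert (w < sqrt Z) by (unfold w; lra). nra. }
    assert (HwM : (1 - mu) * w < M).
    { assert (w < M/(1-mu)) by (unfold w; lra).
      apply (Rmult_lt_compat_l (1-mu)) in H; auto.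
      replace ((1 - mu) * (M / (1 - mu))) with M in H by (field; lra). exact H. }
    assert (Hwmu : mu < (1 - mu) * w).
    { apply (Rmult_lt_compat_l (1-mu)) in Hww0; auto.
      replace ((1 - mu) * w0) with mu in Hww0 by (unfold w0; field; lra). exact Hww0. }
    assert (HZe : Z * ((1-gamma*mu^3)*k2 gamma M) = mu^3) by (unfold Z; field; split; lra).
    apply (finish v m mu Hmu0 Hcvp).
    apply (invariance v m _ _ Q w mu Hw0 Hdv' Hdm' HmonoB).
    + intros t Hvt Hmt.
      rewrite HAP.
      assert (Hm3 : mu^3 <= m t ^3) by (apply pow_incr; lra).
      assert (Hmu3 : 0 < mu^3) by (apply pow_lt; lra).
      assert (HP2 : 0 < P t ^2) by (apply pow_lt; auto).
      assert (Hv2 : v t ^2 = Q t^2 * (w * w)) by (rewrite Hvt; ring).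
      assert (HAP2 : 0 < A * P t^2) by (apply Rmult_lt_0_compat; auto).
      assert (H1 : A * P t^2 * mu^3 <= A * P t^2 * m t^3)
        by (apply Rmult_le_compat_l; lra).
      assert (H2 : (1 - gamma * m t ^ 3) * v t ^2 <= (1 - gamma * mu ^ 3) * v t^2).
      { apply Rmult_le_compat_r; [apply pow2_ge_0|]. nra. }
      assert (H3 : (1 - gamma * mu ^ 3) * v t^2 <= (1 - gamma * mu^3) * (A * P t ^ 2 * k2 gamma M) * (w*w)).
      { rewrite Hv2.
        replace ((1 - gamma * mu^3) * (A * P t ^ 2 * k2 gamma M) * (w*w)) with
          ((1 - gamma * mu^3) * ((A * P t ^ 2 * k2 gamma M) * (w*w))) by ring.
        apply Rmult_le_compat_l; [lra|]. apply Rmult_le_compat_r; [nra|]. apply Hk2. }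
      assert (H4 : (1 - gamma * mu^3) * (A * P t ^ 2 * k2 gamma M) * (w*w) < A * P t^2 * mu^3).
      { replace ((1 - gamma * mu^3) * (A * P t ^ 2 * k2 gamma M) * (w*w))
          with ((A * P t^2) * ((w*w) * ((1 - gamma * mu^3) * k2 gamma M))) by ring.
        apply Rmult_lt_compat_l; auto.
        apply Rlt_le_trans with (Z * ((1 - gamma * mu^3) * k2 gamma M)); [|rewrite HZe; lra].
        apply Rmult_lt_compat_r; auto. apply Rmult_lt_0_compat; auto. }
      lra.
    + intros t Hmt Hvt. rewrite Hmt.
      assert (HQ := HQpos t).
      assert ((1 - mu) * (Q t * w) <= (1 - mu) * v t) by (apply Rmult_le_compat_l; lra).
      assert (0 < Q t * ((1-mu)*w - mu)) by (apply Rmult_lt_0_compat; lra).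
      unfold Q in *. nra.
    + apply (start v m Q (c lm) w Sm mu HQb Hw0); [|exact HmSmu|exact Hcvm].
      change (c lm * w < vS).
      assert (HM' : M <= mS) by exact HMle.
      assert (H1 : mS * (c lm * w) = (1 - mS) * vS * w) by nra.
      assert (H2 : (1 - mS) * vS * w <= (1 - mu) * vS * w).
      { apply Rmult_le_compat_r; auto. apply Rmult_le_compat_r; lra. }
      assert (H3 : (1 - mu) * vS * w < mS * vS).
      { replace ((1 - mu) * vS * w) with (((1-mu)*w) * vS) by ring.
        apply Rmult_lt_compat_r; lra. }
      apply (Rmult_lt_reg_l mS); lra.
Qed.
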